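(* Let $M$ be an $\mathbf{FB}$-module and $a:\mathbf V\otimes M\to\mathbf V\otimes M$ a map of $\mathbf{FB}$-modules, and write $$a(t^j\otimes x)=t^j\otimes\omega^{S\setminus\{j\}}(x)+\sum_{i\in S\setminus\{j\}}t^i\otimes\alpha^S_{i,j}(x)\qquad(j\in S,\ x\in M(S\setminus\{j\})),$$ where $\omega^T$ is an endomorphism of $M(T)$ and $\alpha^S_{i,j}:M(S\setminus\{j\})\to M(S\setminus\{i\})$. Then $(M,a)$ is a representation of $\underline{\mathfrak{gl}}(\mathbf V)$ if and only if: (a) the operations $\alpha$ and $\omega$ commute with themselves and with each other; and (b) for every finite set $S$ and distinct $i,j,k\in S$, $\alpha^{S\setminus\{i\}}_{j,k}\circ\alpha^{S\setminus\{k\}}_{i,j}=\alpha^{S\setminus\{j\}}_{i,k}$.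
   Context: $k$ is a commutative ring; an $\mathbf{FB}$-module is a functor from finite sets and bijections to $k$-modules; $(M\otimes N)(S)=\bigoplus_{T\subseteq S}M(T)\otimes N(S\setminus T)$ (symmetric monoidal). $\mathbf V$ is $k$ on one-element sets and $0$ otherwise, with basis $t^i$ of $\mathbf V(\{i\})$, so $(\mathbf V\otimes M)(S)=\bigoplus_{j\in S}t^j\otimes M(S\setminus\{j\})$. A representation of $\underline{\mathfrak{gl}}(\mathbf V)$ is a pair $(M,a)$ with $a:\mathbf V\otimes M\to\mathbf V\otimes M$ such that $a_1a_2-a_2a_1=\tau(a_1-a_2)$ on $\mathbf V\otimes\mathbf V\otimes M$, where $\tau$ is the symmetry of the first two factors, $a_2=\mathrm{id}_{\mathbf V}\otimes a$, $a_1=\tau a_2\tau$. Operations: here $\alpha$ is regarded as the (natural in bijections) family $\alpha^S_{A,B}:M(S\setminus B)\to M(S\setminus A)$ indexed by disjoint one-element subsets $A=\{i\},B=\{j\}$, and $\omega$ as the family $\omega^S_{\emptyset,\emptyset}=\omega^S$. Two such families $\phi,\psi$ commute if for every finite set $S$ and pairwise disjoint subsets $A,B,C,D\subseteq S$ for which the maps are defined, $\psi^{S\setminus A}_{C,D}\circ\phi^{S\setminus D}_{A,B}=\phi^{S\setminus C}_{A,B}\circ\psi^{S\setminus B}_{C,D}$ as maps $M(S\setminus(B\cup D))\to M(S\setminus(A\cup C))$; a family commutes with itself if this holds with $\psi=\phi$. *)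

(* Defs.v *)
From HB Require Import structures.
From mathcomp Require Import all_boot all_order all_algebra.
From mathcomp Require Import finmap.
Set Implicit Arguments. Unset Strict Implicit. Unset Printing Implicit Defensive.
Import GRing.Theory.
Local Open Scope fset_scope.
Local Open Scope ring_scope.

(* FB-modules.  The category FB of finite sets and bijections is replaced by *)
(* the equivalent groupoid of finite subsets of nat.  A bijection A -> B is *)
(* represented by any f : nat -> nat injective on A with f @` A = B (two such *)
(* f represent the same bijection iff they agree on A).  An FB-module is a   *)
(* family of k-modules M A together with maps act A B f : M A -> M B,        *)
(* meaningful for such f, satisfying the functor laws.                       *)

Definition is_bij (f : nat -> nat) (A B : {fset nat}) : Prop :=
  {in A &, injective f} /\ f @` A = B.

Section FB.
Variable k : comPzRingType.
Variable M : {fset nat} -> lmodType k.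
Variable act : forall A B : {fset nat}, (nat -> nat) -> M A -> M B.
Arguments act : clear implicits.

Definition is_FBmod : Prop :=
  [/\ (forall A B f, is_bij f A B ->
         forall (c : k) (x y : M A),
           act A B f (c *: x + y) = c *: act A B f x + act A B f y),
      (forall A B f g, is_bij f A B -> {in A, f =1 g} ->
         act A B f =1 act A B g),
      (forall A, act A A id =1 id) &
      (forall A B C f g, is_bij f A B -> is_bij g B C ->
         forall x, act B C g (act A B f x) = act A C (g \o f) x)].

(* the identity bijection between two (equal) sets, used as a cast *)
Definition cast (A B : {fset nat}) : M A -> M B := act A B id.
Arguments cast : clear implicits.

(* A map a : V (x) M -> V (x) M, where (V (x) M)(S) = (+)_{j in S} t^j (x)   *)
(* M(S \ {j}), is given by its matrix coefficients                           *)
(*     a(t^j (x) x) = sum_{i in S} t^i (x) acomp S i j x,                    *)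
(* acomp S i j : M(S\{j}) -> M(S\{i}) for i, j in S.                         *)

Variable acomp : forall (S : {fset nat}) (i j : nat), M (S `\ j) -> M (S `\ i).
Arguments acomp : clear implicits.

Definition is_FBmap_VM : Prop :=
  (forall S i j, i \in S -> j \in S ->
     forall (c : k) (x y : M (S `\ j)),
       acomp S i j (c *: x + y) = c *: acomp S i j x + acomp S i j y) /\
  (forall S S' f, is_bij f S S' -> forall i j, i \in S -> j \in S ->
     forall x : M (S `\ j),
       act (S `\ i) (S' `\ f i) f (acomp S i j x)
       = acomp S' (f i) (f j) (act (S `\ j) (S' `\ f j) f x)).

(* (V (x) V (x) M)(S) = (+)_{p <> q in S} t^p (x) t^q (x) M((S\{p})\{q}).    *)
(* An element is a family of components x p q; only components with          *)
(* p, q in S, p <> q are meaningful (the others are ignored everywhere).     *)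
Definition VVM (S : {fset nat}) := forall p q : nat, M ((S `\ p) `\ q).

Definition valid2 (S : {fset nat}) (p q : nat) : bool :=
  [&& p \in S, q \in S & p != q].

(* a_2 = id_V (x) a :  t^p (x) t^q (x) x  |->  sum_{l in S\p} t^p (x) t^l (x) acomp (S\p) l q x *)
Definition a2 (S : {fset nat}) (x : VVM S) : VVM S :=
  fun u v => \sum_(q <- S `\ u) acomp (S `\ u) v q (x u q).

(* tau : t^p (x) t^q (x) x |-> t^q (x) t^p (x) x *)
Definition tau (S : {fset nat}) (x : VVM S) : VVM S :=
  fun u v => cast ((S `\ v) `\ u) ((S `\ u) `\ v) (x v u).

Definition a1 (S : {fset nat}) (x : VVM S) : VVM S := tau (a2 (tau x)).

Definition subVVM (S : {fset nat}) (x y : VVM S) : VVM S :=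
  fun u v => x u v - y u v.

Definition is_gl_rep : Prop :=
  forall (S : {fset nat}) (x : VVM S) (u v : nat), valid2 S u v ->
    subVVM (a1 (a2 x)) (a2 (a1 x)) u v = tau (subVVM (a1 x) (a2 x)) u v.

(* Operations: families phi^S_{A,B} : M(S\B) -> M(S\A) indexed by pairs of   *)
(* disjoint subsets (A,B) of a prescribed shape; the shape is given by an    *)
(* index type I and maps AI, BI : I -> {fset nat}.                           *)
(* Commutation: for all S and pairwise disjoint A,B,C,D subsets of S,        *)
(*   psi^{S\A}_{C,D} o phi^{S\D}_{A,B} = phi^{S\C}_{A,B} o psi^{S\B}_{C,D}   *)
(* as maps M(S\(B u D)) -> M(S\(A u C)) (identifying equal sets via cast).   *)

Definition pairwise_disjoint4 (A B C D : {fset nat}) : bool :=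
  [&& A `&` B == fset0, A `&` C == fset0, A `&` D == fset0,
      B `&` C == fset0, B `&` D == fset0 & C `&` D == fset0].

Definition commute_ops (I J : Type)
  (AI BI : I -> {fset nat}) (phi : forall S i, M (S `\` BI i) -> M (S `\` AI i))
  (AJ BJ : J -> {fset nat}) (psi : forall S j, M (S `\` BJ j) -> M (S `\` AJ j))
  : Prop :=
  forall (S : {fset nat}) (i : I) (j : J),
    let A := AI i in let B := BI i in let C := AJ j in let D := BJ j in
    A `<=` S -> B `<=` S -> C `<=` S -> D `<=` S -> pairwise_disjoint4 A B C D ->
    forall x : M (S `\` (B `|` D)),
      cast ((S `\` A) `\` C) (S `\` (A `|` C))
        (psi (S `\` A) j (cast ((S `\` D) `\` A) ((S `\` A) `\` D)
          (phi (S `\` D) i (cast (S `\` (B `|` D)) ((S `\` D) `\` B) x))))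
      =
      cast ((S `\` C) `\` A) (S `\` (A `|` C))
        (phi (S `\` C) i (cast ((S `\` B) `\` C) ((S `\` C) `\` B)
          (psi (S `\` B) j (cast (S `\` (B `|` D)) ((S `\` B) `\` D) x)))).

(* alpha^S_{i,j} : M(S\{j}) -> M(S\{i}), indexed by A = {i}, B = {j} *)
Definition alpha_A (ij : nat * nat) : {fset nat} := [fset ij.1].
Definition alpha_B (ij : nat * nat) : {fset nat} := [fset ij.2].
Definition alpha_op (S : {fset nat}) (ij : nat * nat) :
  M (S `\` alpha_B ij) -> M (S `\` alpha_A ij) := acomp S ij.1 ij.2.

Variable omega : forall T : {fset nat}, M T -> M T.
Arguments omega : clear implicits.

(* omega^S_{emptyset,emptyset} = omega^S *)
Definition omega_A (_ : unit) : {fset nat} := fset0.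
Definition omega_B (_ : unit) : {fset nat} := fset0.
Definition omega_op (S : {fset nat}) (t : unit) :
  M (S `\` omega_B t) -> M (S `\` omega_A t) :=
  fun x => cast S (S `\` fset0) (omega S (cast (S `\` fset0) S x)).

Definition cond_a : Prop :=
  [/\ commute_ops alpha_op alpha_op,
      commute_ops omega_op omega_op,
      commute_ops alpha_op omega_op &
      commute_ops omega_op alpha_op].

Definition cond_b : Prop :=
  forall (S : {fset nat}) (i j l : nat), i \in S -> j \in S -> l \in S ->
    i != j -> j != l -> i != l ->
    forall x : M ((S `\ j) `\ l),
      cast ((S `\ i) `\ j) ((S `\ j) `\ i)
        (acomp (S `\ i) j l (cast ((S `\ l) `\ i) ((S `\ i) `\ l)
          (acomp (S `\ l) i j (cast ((S `\ j) `\ l) ((S `\ l) `\ j) x))))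
      = acomp (S `\ j) i l x.

End FB.

(* Main.v *)
Require Import Defs.
From HB Require Import structures.
From mathcomp Require Import all_boot all_order all_algebra.
From mathcomp Require Import finmap.
From Stdlib Require Import Eqdep_dec.
Set Implicit Arguments. Unset Strict Implicit. Unset Printing Implicit Defensive.
Import GRing.Theory.
Local Open Scope fset_scope.
Local Open Scope fset_scope.
Lemma fresh (S : {fset nat}) : exists p, p \notin S.
Proof.
exists (\max_(i <- enum_fset S) i)%N.+1; apply/negP => pS.
have := leq_bigmax_seq (F := fun i : nat => i) (P := predT) _ pS isT.
by rewrite ltnn.
Qed.
Local Open Scope ring_scope.

Ltac taut :=
  repeat match goal with
  | |- context [?x == ?y] => case: (x == y)
  | |- context [?x \in ?A] => case: (x \in A)
  end; by [].
Ltac fsetdec := apply/fsetP => z; rewrite !inE;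
  repeat match goal with
  | Hf : is_true (?p \notin _) |- context [?z == ?p] =>
      is_var z; case: (eqVneq z p) => [->|_]; rewrite ?(negbTE Hf) ?eqxx
  end; taut.

Section Proof.
Variable k : comPzRingType.
Variable M : {fset nat} -> lmodType k.
Variable act : forall A B : {fset nat}, (nat -> nat) -> M A -> M B.
Variable acomp : forall (S : {fset nat}) (i j : nat), M (S `\ j) -> M (S `\ i).
Variable omega : forall T : {fset nat}, M T -> M T.
Arguments act : clear implicits.
Arguments acomp : clear implicits.
Arguments omega : clear implicits.
Hypothesis HFB : is_FBmod act.
Hypothesis HVM : is_FBmap_VM act acomp.
Hypothesis Hom : forall (S : {fset nat}) (j : nat), j \in S ->
     forall x : M (S `\ j), acomp S j j x = omega (S `\ j) x.

Notation cst := (cast act).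

Lemma castE A (x : M A) : cst A x = x.
Proof. by case: HFB => _ _ H _; apply: H. Qed.

Lemma castD A B (x y : M A) : A = B -> cst B (x + y) = cst B x + cst B y.
Proof. by move=> E; subst; rewrite !castE. Qed.
Lemma castB A B (x y : M A) : A = B -> cst B (x - y) = cst B x - cst B y.
Proof. by move=> E; subst; rewrite !castE. Qed.
Lemma cast_sum A B (I : Type) (r : seq I) (F : I -> M A) : A = B ->
  cst B (\sum_(i <- r) F i) = \sum_(i <- r) cst B (F i).
Proof. move=> E; subst; rewrite castE; apply: eq_bigr => i _; by rewrite castE. Qed.
Lemma cast0 A B : A = B -> cst B (0 : M A) = 0.
Proof. by move=> E; subst; rewrite castE. Qed.

Lemma acompD S i j : i \in S -> j \in S -> forall x y,
  acomp S i j (x + y) = acomp S i j x + acomp S i j y.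
Proof. case: HVM => H _ iS jS x y; by have := H S i j iS jS 1 x y; rewrite !scale1r. Qed.
Lemma acomp0 S i j : i \in S -> j \in S -> acomp S i j 0 = 0.
Proof.
case: HVM => H _ iS jS.
have := H S i j iS jS (-1) 0 0. by rewrite scaleN1r oppr0 addr0 => ->; rewrite scaleN1r addNr.
Qed.

Lemma acomp_sum S i j (I : Type) (r : seq I) (F : I -> M (S `\ j)) :
  i \in S -> j \in S ->
  acomp S i j (\sum_(t <- r) F t) = \sum_(t <- r) acomp S i j (F t).
Proof. move=> iS jS; exact: (big_morph _ (acompD iS jS) (acomp0 iS jS)). Qed.

Lemma sum_fsetD1 (V : zmodType) (A : {fset nat}) a (F : nat -> V) :
  \sum_(q <- A `\ a) F q = \sum_(q <- A) (if q != a then F q else 0).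
Proof.
transitivity (\sum_(q <- A `\ a) (if q != a then F q else 0)).
  by apply: eq_big_seq => q; rewrite !inE => /andP[-> _].
apply: big_fset_incl; first exact: fsubsetDl.
by move=> q qA; rewrite !inE qA andbT negbK => ->.
Qed.

Local Unset Implicit Arguments.
Definition F1 S u v p s (y : M ((S `\ p) `\ s)) : M ((S `\ u) `\ v) :=
  cst ((S `\ u) `\ v) (acomp (S `\ v) u p (cst ((S `\ v) `\ p) (acomp (S `\ p) v s y))).
Definition F2 S u v p s (y : M ((S `\ p) `\ s)) : M ((S `\ u) `\ v) :=
  acomp (S `\ u) v s (cst ((S `\ u) `\ s) (acomp (S `\ s) u p (cst ((S `\ s) `\ p) y))).
Definition G S u v p s (y : M ((S `\ p) `\ s)) : M ((S `\ u) `\ v) :=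
  cst ((S `\ u) `\ v) (cst ((S `\ v) `\ u) (acomp (S `\ u) v p (cst ((S `\ u) `\ p) y))).
Definition H S u v p s (y : M ((S `\ p) `\ s)) : M ((S `\ u) `\ v) :=
  cst ((S `\ u) `\ v) (acomp (S `\ v) u s (cst ((S `\ v) `\ s) y)).

Definition D0 S u v p s (y : M ((S `\ p) `\ s)) : M ((S `\ u) `\ v) :=
  ((if (p != v) && (s != p) then F1 S u v p s y else 0) -
   (if (s != u) && (p != s) then F2 S u v p s y else 0)) -
  ((if (s == u) && (p != u) then G S u v p s y else 0) -
   (if (p == v) && (s != v) then H S u v p s y else 0)).

Lemma L1 S u v (x : VVM M S) : u \in S -> v \in S -> u != v ->
  cst ((S `\ u) `\ v) (\sum_(q <- S `\ v) acomp (S `\ v) u q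
     (cst ((S `\ v) `\ q) (\sum_(r <- S `\ q) acomp (S `\ q) v r (x q r))))
  = \sum_(p <- S) \sum_(s <- S)
      (if (p != v) && (s != p) then F1 S u v p s (x p s) else 0).
Proof.
move=> uS vS uv.
rewrite cast_sum; last by fsetdec.
rewrite sum_fsetD1; apply: eq_big_seq => p pS.
case: ifP => pv /=; last by rewrite big1.
rewrite cast_sum; last by fsetdec.
rewrite acomp_sum; last 2 first.
  by rewrite !inE uv uS.
  by rewrite !inE pv pS.
rewrite cast_sum; last by fsetdec.
rewrite sum_fsetD1; apply: eq_big_seq => s sS.
by case: ifP.
Qed.


Lemma L2 S u v (x : VVM M S) : u \in S -> v \in S -> u != v ->
  \sum_(q <- S `\ u) acomp (S `\ u) v q (cst ((S `\ u) `\ q)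
     (\sum_(r <- S `\ q) acomp (S `\ q) u r (cst ((S `\ q) `\ r) (x r q))))
  = \sum_(p <- S) \sum_(s <- S)
      (if (s != u) && (p != s) then F2 S u v p s (x p s) else 0).
Proof.
move=> uS vS uv.
rewrite [RHS]exchange_big /=.
rewrite sum_fsetD1; apply: eq_big_seq => s sS.
case: ifP => su /=; last by rewrite big1.
rewrite cast_sum; last by fsetdec.
rewrite acomp_sum; last 2 first.
  by rewrite !inE eq_sym uv vS.
  by rewrite !inE su sS.
rewrite sum_fsetD1; apply: eq_big_seq => p pS.
by case: ifP.
Qed.

Lemma R1 S u v (x : VVM M S) : u \in S -> v \in S -> u != v ->
  cst ((S `\ u) `\ v) (cst ((S `\ v) `\ u) (\sum_(q <- S `\ u)
     acomp (S `\ u) v q (cst ((S `\ u) `\ q) (x q u))))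
  = \sum_(p <- S) \sum_(s <- S)
      (if (s == u) && (p != u) then G S u v p s (x p s) else 0).
Proof.
move=> uS vS uv.
rewrite cast_sum; last by fsetdec.
rewrite cast_sum; last by fsetdec.
rewrite sum_fsetD1; apply: eq_big_seq => p pS.
rewrite (bigD1_seq u) //= ?fset_uniq //.
rewrite [\sum_(i <- S | i != u) _]big1 ?addr0; last first.
  by move=> s /negbTE ->.
by rewrite eqxx /=; case: ifP.
Qed.

Lemma R2 S u v (x : VVM M S) : u \in S -> v \in S -> u != v ->
  cst ((S `\ u) `\ v) (\sum_(q <- S `\ v) acomp (S `\ v) u q (x v q))
  = \sum_(p <- S) \sum_(s <- S)
      (if (p == v) && (s != v) then H S u v p s (x p s) else 0).
Proof.
move=> uS vS uv.
rewrite [RHS](bigD1_seq v) //= ?fset_uniq //.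
rewrite [\sum_(i <- S | i != v) _]big1 ?addr0; last first.
  by move=> p /negbTE pv; rewrite big1 // => s _; rewrite pv.
rewrite cast_sum; last by fsetdec.
rewrite sum_fsetD1; apply: eq_big_seq => s sS.
by rewrite eqxx /= /H castE.
Qed.

Lemma sum2B (V : zmodType) (r : seq nat) (f g : nat -> nat -> V) :
  \sum_(p <- r) \sum_(s <- r) (f p s - g p s) =
  \sum_(p <- r) \sum_(s <- r) f p s - \sum_(p <- r) \sum_(s <- r) g p s.
Proof. rewrite -sumrB; apply: eq_bigr => p _; by rewrite sumrB. Qed.

Lemma gl_diff S (x : VVM M S) u v : valid2 S u v ->
  subVVM (a1 act acomp (a2 acomp x)) (a2 acomp (a1 act acomp x)) u v
  - tau act (subVVM (a1 act acomp x) (a2 acomp x)) u v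
  = \sum_(p <- S) \sum_(s <- S) D0 S u v p s (x p s).
Proof.
case/and3P => uS vS uv.
rewrite /D0 !sum2B.
rewrite -(L1 S u v x uS vS uv) -(L2 S u v x uS vS uv) -(R1 S u v x uS vS uv) -(R2 S u v x uS vS uv).
rewrite /subVVM /a1 /a2 /tau castB //; fsetdec.
Qed.


Local Set Implicit Arguments.
Ltac mem := rewrite ?inE; repeat (apply/andP; split); first [done | by rewrite eq_sym].

Lemma D0_0 S u v p s : valid2 S u v -> p \in S -> s \in S -> D0 S u v p s 0 = 0.
Proof.
case/and3P => uS vS uv pS sS.
rewrite /D0.
have -> : (if (p != v) && (s != p) then F1 S u v p s 0 else 0) = 0.
  case: ifP => // /andP[h1 h2]; rewrite /F1.
  rewrite acomp0; [|mem|mem]. rewrite cast0; [|fsetdec].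
  rewrite acomp0; [|mem|mem]. rewrite cast0; [|fsetdec]. done.
have -> : (if (s != u) && (p != s) then F2 S u v p s 0 else 0) = 0.
  case: ifP => // /andP[h1 h2]; rewrite /F2.
  rewrite cast0; [|fsetdec].
  rewrite acomp0; [|mem|mem]. rewrite cast0; [|fsetdec].
  rewrite acomp0; [|mem|mem]. done.
have -> : (if (s == u) && (p != u) then G S u v p s 0 else 0) = 0.
  case: ifP => // /andP[/eqP h1 h2]; subst s; rewrite /G.
  rewrite cast0; [|fsetdec].
  rewrite acomp0; [|mem|mem]. rewrite cast0; [|fsetdec].
  rewrite cast0; [|fsetdec]. done.
have -> : (if (p == v) && (s != v) then H S u v p s 0 else 0) = 0.
  case: ifP => // /andP[/eqP h1 h2]; subst p; rewrite /H.
  rewrite cast0; [|fsetdec].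
  rewrite acomp0; [|mem|mem]. rewrite cast0; [|fsetdec]. done.
by rewrite !subrr.
Qed.

Lemma glE : is_gl_rep act acomp <->
  (forall S u v p s, valid2 S u v -> p \in S -> s \in S ->
     forall y, D0 S u v p s y = 0).
Proof.
split.
- move=> Hgl S u v p s V pS sS y.
  pose x : VVM M S := fun p' s' =>
    if (p' == p) && (s' == s) then cst ((S `\ p') `\ s') y else 0.
  have := Hgl S x u v V. move/eqP; rewrite -subr_eq0; move/eqP; rewrite gl_diff //.
  rewrite (bigD1_seq p) ?fset_uniq //= (bigD1_seq s) ?fset_uniq //=.
  rewrite big1_seq ?addr0; last first.
    by move=> s' /andP[s's s'S]; rewrite /x eqxx (negbTE s's) /=; exact: D0_0.
  rewrite big1_seq ?addr0; last first.
    move=> p' /andP[p'p p'S]; rewrite big1_seq // => s' /andP[_ s'S].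
    by rewrite /x (negbTE p'p) /=; exact: D0_0.
  by rewrite /x !eqxx /= castE.
- move=> H0 S x u v V. apply/eqP; rewrite -subr_eq0; apply/eqP.
  rewrite gl_diff //.
  rewrite big1_seq // => p /andP[_ pS]; rewrite big1_seq // => s /andP[_ sS].
  exact: H0.
Qed.


Definition tg (A : {fset nat}) (x : M A) : {A : {fset nat} & M A} :=
  existT (fun A => M A : Type) A x.
Arguments tg {A} x.

Lemma tg_inj A (x y : M A) : tg x = tg y -> x = y.
Proof. move=> e; exact: (inj_pair2_eq_dec _ (@eq_comparable _) _ _ _ _ e). Qed.

Lemma tg_cast A B (x : M A) : A = B -> tg (cst B x) = tg x.
Proof. by move=> E; subst; rewrite castE. Qed.

Lemma tg_omega A B (x : M A) (y : M B) : tg x = tg y -> tg (omega A x) = tg (omega B y).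
Proof.
move=> e; have AB : A = B := f_equal (@projT1 _ _) e.
subst; by rewrite (tg_inj e).
Qed.

Lemma tg_acomp S S' i j (x : M (S `\ j)) (y : M (S' `\ j)) :
  S = S' -> tg x = tg y -> tg (acomp S i j x) = tg (acomp S' i j y).
Proof. move=> E; subst; by move=> /tg_inj ->. Qed.

Lemma use_tg A (a b : M A) (c d : {A : {fset nat} & M A}) :
  c = d -> tg a = c -> d = tg b -> a = b.
Proof. by move=> cd ac db; apply: tg_inj; rewrite ac cd db. Qed.

Lemma tg_trans (a b c d : {A : {fset nat} & M A}) :
  c = d -> a = c -> d = b -> a = b.
Proof. by move=> -> -> ->. Qed.

Ltac heq := repeat first [ match goal with |- ?a = ?b => constr_eq a b; reflexivity end
  | rewrite tg_cast; [|fsetdec]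
  | apply: tg_omega
  | apply: tg_acomp; [fsetdec|] ].



Lemma disj1 (a b : nat) : [fset a] `&` [fset b] == fset0 -> a != b.
Proof.
move=> /eqP E; apply/negP => /eqP ab; subst.
have : b \in [fset b] `&` [fset b] by rewrite !inE eqxx.
by rewrite E inE.
Qed.


Definition D0_zero := forall S u v p s, valid2 S u v -> p \in S -> s \in S ->
     forall y, D0 S u v p s y = 0.

Lemma ao_core : D0_zero -> forall S a b, a \in S -> b \in S -> a != b ->
  forall x : M (S `\ b),
  tg (omega (S `\ a) (acomp S a b x)) = tg (acomp S a b (omega (S `\ b) x)).
Proof.
move=> H0 S a b aS bS ab x.
have [p pS] := fresh S.
have pa : p != a by apply: contraNneq pS => ->.
have pb : p != b by apply: contraNneq pS => ->.
have V : valid2 (p |` S) p a by rewrite /valid2 !inE eqxx aS orbT pa.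
have pS2 : p \in p |` S by rewrite !inE eqxx.
have bS2 : b \in p |` S by rewrite !inE bS orbT.
have := H0 (p |` S) p a p b V pS2 bS2 (cst (((p |` S) `\ p) `\ b) x).
rewrite /D0 (eq_sym b p) (negbTE pa) (negbTE pb) /=.
rewrite subrr subr0 => /eqP; rewrite subr_eq0 => /eqP E.
have m1 : p \in (p |` S) `\ a by rewrite !inE eqxx pa.
have m2 : p \in (p |` S) `\ b by rewrite !inE eqxx pb.
rewrite /F1 /F2 !(Hom m1) !(Hom m2) in E.
apply: (tg_trans (congr1 tg E)); heq.
Qed.


Lemma disj1' (a b : nat) : a != b -> [fset a] `&` [fset b] == fset0.
Proof.
move=> h; apply/eqP/fsetP => z; rewrite !inE.
apply/negP => /andP[/eqP za /eqP zb]; subst.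
by rewrite eqxx in h.
Qed.

Ltac neqs := repeat match goal with
  | h : is_true (?x != ?y) |- context [?x == ?y] => rewrite (negbTE h)
  | h : is_true (?x != ?y) |- context [?y == ?x] => rewrite (eq_sym y x) (negbTE h)
  end.

Ltac pd := rewrite /pairwise_disjoint4 ?fsetI0 ?fset0I ?eqxx /=;
  repeat (apply/andP; split); try done; apply: disj1'; first [done | by rewrite eq_sym].
Ltac sub1 := rewrite fsub1set; mem.

Lemma conds : D0_zero <-> cond_a act acomp omega /\ cond_b act acomp.
Proof.
split.
- move=> H0; split; first split.
  + move=> S [a b] [c d] /=; rewrite /alpha_A /alpha_B /alpha_op /=.
    rewrite !fsub1set => aS bS cS dS /and5P[dab dac dad dbc /andP[dbd dcd]] x.
    move: dab dac dad dbc dbd dcd => /disj1 dab /disj1 dac /disj1 dad /disj1 dbc /disj1 dbd /disj1 dcd.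
    have V : valid2 S a c by rewrite /valid2 aS cS dac.
    have := H0 S a c b d V bS dS (cst _ x).
    rewrite /D0; neqs; rewrite /= => /eqP.
    rewrite subrr subr0 subr_eq0 => /eqP E.
    apply: (use_tg (congr1 tg (esym E))); rewrite /F1 /F2; heq.
  + move=> S [] [] /= _ _ _ _ _ x; rewrite /omega_op.
    apply: tg_inj; heq.
  + move=> S [a b] [] /=; rewrite /alpha_A /alpha_B /alpha_op /omega_op /=.
    rewrite !fsub1set => aS bS _ _ /and5P[/disj1 ab _ _ _ _] x.
    apply: tg_inj; apply: (tg_trans (ao_core H0 aS bS ab (cst (S `\ b) x))); heq.
  + move=> S [] [c d] /=; rewrite /alpha_A /alpha_B /alpha_op /omega_op /=.
    rewrite !fsub1set => _ _ cS dS /and5P[_ _ _ _ /andP[_ /disj1 cd]] x.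
    apply: tg_inj; apply: (tg_trans (esym (ao_core H0 cS dS cd (cst (S `\ d) x)))); heq.
  + move=> S i j l iS jS lS ij jl il x.
    have V : valid2 S i j by rewrite /valid2 iS jS ij.
    have := H0 S i j j l V jS lS x.
    rewrite /D0 eqxx; neqs; rewrite /= => /eqP.
    rewrite !sub0r opprK addrC subr_eq0 => /eqP E.
    apply: (use_tg (congr1 tg (esym E))); rewrite /F2 /H; heq.
- move=> [[Haa Hoo Hao Hoa] Hb] S u v p s /and3P[uS vS uv] pS sS y.
  rewrite /D0.
  have [eps|ps] := eqVneq p s.
    by subst s; rewrite /= ?andbF ?andbN !subrr.
  have [pv|pv] := eqVneq p v; have [su|su] := eqVneq s u.
  + subst p s; neqs; rewrite /=.
    apply/eqP; rewrite subrr sub0r oppr_eq0 subr_eq0; apply/eqP.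
    have m1 : v \in S `\ u by mem.
    have m2 : u \in S `\ v by mem.
    rewrite /G /H !(Hom m1) !(Hom m2); apply: tg_inj; heq.
  + subst p; neqs; rewrite /=.
    apply/eqP; rewrite !sub0r opprK addrC subr_eq0 eq_sym; apply/eqP.
    have us : u != s by rewrite eq_sym.
    have E := Hb S u v s uS vS sS uv ps us y.
    apply: (use_tg (congr1 tg E)); rewrite /F2 /H; heq.
  + subst s; neqs; rewrite /=.
    apply/eqP; rewrite !subr0 subr_eq0; apply/eqP.
    have vu : v != u by rewrite eq_sym.
    have up : u != p by rewrite eq_sym.
    have vp : v != p by rewrite eq_sym.
    have E := Hb S v u p vS uS pS vu up vp (cst ((S `\ u) `\ p) y).
    apply: (use_tg (congr1 tg E)); rewrite /F1 /G; heq.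
  + neqs; rewrite /=.
    apply/eqP; rewrite subrr subr0 subr_eq0; apply/eqP.
    have [pu|pu] := eqVneq p u; have [sv|sv] := eqVneq s v.
    * subst p s. have m1 : u \in S `\ v by mem. have m2 : v \in S `\ u by mem.
      rewrite /F1 /F2 !(Hom m1) !(Hom m2); apply: tg_inj; heq.
    * subst p.
      have h1 : [fset v] `<=` S `\ u by sub1.
      have h2 : [fset s] `<=` S `\ u by sub1.
      have h5 : pairwise_disjoint4 [fset v] [fset s] fset0 fset0 by pd.
      have E := Hao (S `\ u) (v, s) tt h1 h2 (fsub0set _) (fsub0set _) h5 (cst _ y).
      rewrite /alpha_op /omega_op /= in E.
      have m1 : u \in S `\ v by mem. have m2 : u \in S `\ s by mem.
      rewrite /F1 /F2 !(Hom m1) !(Hom m2).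
      apply: (use_tg (congr1 tg E)); heq.
    * subst s.
      have h1 : [fset u] `<=` S `\ v by sub1.
      have h2 : [fset p] `<=` S `\ v by sub1.
      have h5 : pairwise_disjoint4 [fset u] [fset p] fset0 fset0 by pd.
      have E := Hao (S `\ v) (u, p) tt h1 h2 (fsub0set _) (fsub0set _) h5 (cst _ y).
      rewrite /alpha_op /omega_op /= in E.
      have m1 : v \in S `\ p by mem. have m2 : v \in S `\ u by mem.
      rewrite /F1 /F2 !(Hom m1) !(Hom m2).
      apply: (use_tg (congr1 tg (esym E))); heq.
    * have h1 : [fset u] `<=` S by sub1.
      have h2 : [fset p] `<=` S by sub1.
      have h3 : [fset v] `<=` S by sub1.
      have h4 : [fset s] `<=` S by sub1.
      have h5 : pairwise_disjoint4 [fset u] [fset p] [fset v] [fset s] by pd.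
      have E := Haa S (u, p) (v, s) h1 h2 h3 h4 h5 (cst _ y).
      rewrite /alpha_op /= in E.
      apply: (use_tg (congr1 tg (esym E))); rewrite /F1 /F2; heq.
Qed.

Theorem main_equiv : is_gl_rep act acomp <-> cond_a act acomp omega /\ cond_b act acomp.
Proof. rewrite glE; exact: conds. Qed.

End Proof.

Unset Implicit Arguments.

Theorem proposition4p6 (k : comPzRingType) (M : {fset nat} -> lmodType k)
  (act : forall A B : {fset nat}, (nat -> nat) -> M A -> M B)
  (acomp : forall (S : {fset nat}) (i j : nat), M (S `\ j) -> M (S `\ i))
  (omega : forall T : {fset nat}, M T -> M T) :
  is_FBmod act ->
  is_FBmap_VM act acomp ->
  (forall (S : {fset nat}) (j : nat), j \in S ->
     forall x : M (S `\ j), acomp S j j x = omega (S `\ j) x) ->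
  (is_gl_rep act acomp <-> cond_a act acomp omega /\ cond_b act acomp).
Proof.
move=> HFB HVM Hom; exact: (@main_equiv k M act acomp omega HFB HVM Hom).
Qed.
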